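(* Run MUDAN on a reported profile $\theta'$ and suppose the final winner set $W$ is nonempty; let $w^*$ be the last buyer added to $W$. Then for every buyer $i\neq w^*$: $i$ belongs to the explored set $A$ at the moment $w^*$ is selected if and only if there is a directed path from $s$ to $i$ in $G_{\theta'}$ that does not pass through $w^*$ (i.e. $w^*$ is not critical for $i$).
   Context: Single-demand model. A seller $s$ has $m\ge 1$ identical items. Buyers $B=\{1,\dots,n\}$; buyer $i$ has a true valuation $v_i\in\mathbb{R}_{\ge0}$ and true neighbour set $r_i\subseteq B$; the seller has a fixed neighbour set $r_s\subseteq B$. Buyer $i$ reports $(v'_i,r'_i)$ with $v'_i\ge 0$, $r'_i\subseteq r_i$. The profile graph $G_{\theta'}$ of the global report $\theta'$ is the directed graph on $\{s\}\cup B$ with an edge $(x,y)$ iff $y\in r'_x$ (for $x=s$ use $r_s$). A buyer $w$ is critical for a buyer $i$ if every directed path from $s$ to $i$ in $G_{\theta'}$ passes through $w$. Priority rule: each buyer $i$ is given a priority $\sigma_i$ that is a function of its reported neighbour set $r'_i$ only (e.g. $\sigma_i=|r'_i|$), independent of all reported valuations and non-decreasing with respect to inclusion of $r'_i$; ties are broken by a fixed total order on buyers. MUDAN, run on a reported profile $\theta'$. It maintains an explored set $A\subseteq B$, a winner set $W\subseteq A$, remaining supply $m'=m-|W|$, and tentative payments. For current $A,W$ the potential-winner set $P(A,W)$ is: $P=A$ if $|A\setminus W|\le m'$; otherwise $P=W\cup\{$the $m'$ buyers of $A\setminus W$ with highest reported valuations$\}$ (ties broken by a fixed total order). Buyers in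 $A\setminus P$ are called exhausted. Initialise $A=r_s$, $W=\varnothing$, and repeat: (1) Closure: while some buyer $x\in W\cup(A\setminus P(A,W))$ (with $P$ recomputed from the current $A,W$) has $r'_x\not\subseteq A$, set $A\leftarrow A\cup r'_x$. (2) Let $P=P(A,W)$; if $P\setminus W=\varnothing$, stop. (3) Let $w$ be the buyer of $P\setminus W$ with highest priority; set its tentative payment $\hat p_w$ to the $(m'+1)$-th highest reported valuation in $A\setminus W$ (current $m'$, before adding $w$), or $0$ if $|A\setminus W|\le m'$; add $w$ to $W$. Output: every $w\in W$ gets an item and pays $\hat p_w$; other buyers get nothing and pay $0$. *)

(* Defs.v *)
From mathcomp Require Import all_boot all_order all_algebra.
Set Implicit Arguments. Unset Strict Implicit. Unset Printing Implicit Defensive.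
Import Order.TTheory GRing.Theory Num.Theory.

(* Buyers are 'I_n; the fixed total order used for tie-breaking is the index
   order on 'I_n.  A reported profile is (v, r) with v : 'I_n -> R the reported
   valuations and r : 'I_n -> {set 'I_n} the reported neighbour sets; rs is the
   seller's neighbour set. *)

Section Mudan.
Variables (R : realDomainType) (n : nat).
Implicit Types (A W S : {set 'I_n}).

Definition better (v : 'I_n -> R) (i j : 'I_n) : bool :=
  ((v j < v i)%R || ((v i == v j) && (i < j)%N)).

Definition topk (v : 'I_n -> R) (k : nat) S : {set 'I_n} :=
  [set x in S | (#|[set y in S | better v y x]| < k)%N].

Definition potential (m : nat) (v : 'I_n -> R) A W : {set 'I_n} :=
  if (#|A :\: W| <= m - #|W|)%N then A
  else W :|: topk v (m - #|W|) (A :\: W).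

Definition closure_step (m : nat) (v : 'I_n -> R) (r : 'I_n -> {set 'I_n})
    W A : {set 'I_n} :=
  match [pick x | (x \in W :|: (A :\: potential m v A W)) && ~~ (r x \subset A)] with
  | Some x => A :|: r x
  | None => A
  end.

(* closure: iterate until fixpoint (each effective step strictly enlarges A,
   so n.+1 iterations reach the fixpoint) *)
Definition closure (m : nat) (v : 'I_n -> R) (r : 'I_n -> {set 'I_n}) A W :=
  iter n.+1 (closure_step m v r W) A.

Definition select (m : nat) (v : 'I_n -> R) (r : 'I_n -> {set 'I_n})
    (prio : {set 'I_n} -> R) A W : option 'I_n :=
  [pick w in potential m v A W :\: W |
     [forall y in potential m v A W :\: W,
        (prio (r y) < prio (r w))%R || ((prio (r y) == prio (r w)) && (w <= y)%N)]].

(* the run of MUDAN from state (A, W): the list of pairs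
   (explored set A at the moment of selection, selected winner) *)
Fixpoint mudan_run (m : nat) (v : 'I_n -> R) (r : 'I_n -> {set 'I_n})
    (prio : {set 'I_n} -> R) (k : nat) A W : seq ({set 'I_n} * 'I_n) :=
  match k with
  | 0 => [::]
  | k'.+1 =>
      let A1 := closure m v r A W in
      match select m v r prio A1 W with
      | None => [::]
      | Some w => (A1, w) :: mudan_run m v r prio k' A1 (w |: W)
      end
  end.

(* full run of MUDAN from A = rs, W = empty (each round adds a new winner, so
   n.+1 rounds suffice for termination) *)
Definition mudan_trace (m : nat) (v : 'I_n -> R) (r : 'I_n -> {set 'I_n})
    (prio : {set 'I_n} -> R) (rs : {set 'I_n}) : seq ({set 'I_n} * 'I_n) :=
  mudan_run m v r prio n.+1 rs set0.

End Mudan.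

(* There is a directed path from s to i in the profile graph that avoids
   buyer w: s -> j (j in rs), then edges x -> y with y \in r x, all buyers
   on the path different from w. *)
Definition reach_avoiding (n : nat) (rs : {set 'I_n}) (r : 'I_n -> {set 'I_n})
    (w i : 'I_n) : bool :=
  [exists j in rs, (j != w) &&
     connect (fun x y : 'I_n => [&& x != w, y != w & y \in r x]) j i].

(* Main.v *)
Require Import Defs.
From mathcomp Require Import all_boot all_order all_algebra.
From mathcomp Require Import zify.
Require Import Defs.
Unset Printing Implicit Defensive.
Import Order.TTheory GRing.Theory Num.Theory.

Lemma exists_min (T : finType) (lt : rel T) (S : {set T}) :
  irreflexive lt -> transitive lt -> S != set0 ->
  exists2 x, x \in S & forall y, y \in S -> ~~ lt y x.
Proof.
move=> irr tr /set0Pn [x0 Hx0].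
case: (arg_minnP (fun x => #|[set y in S | lt y x]|) Hx0) => x Hx Hmin.
exists x => // y Hy; apply/negP => Hyx.
have := Hmin y Hy; rewrite leqNgt; move/negP; apply.
apply: proper_card; apply/properP; split.
  apply/subsetP => z; rewrite !inE => /andP[-> Hzy] /=; exact: tr Hzy Hyx.
by exists y; rewrite !inE ?Hy ?Hyx ?irr.
Qed.

Lemma better_irr (R : realDomainType) n (v : 'I_n -> R) : irreflexive (better v).
Proof. by move=> x; rewrite /better ltxx ltnn andbF. Qed.

Lemma better_trans (R : realDomainType) n (v : 'I_n -> R) : transitive (better v).
Proof.
move=> y x z; rewrite /better => /orP[H1|/andP[/eqP E1 H1]] /orP[H2|/andP[/eqP E2 H2]].
- by rewrite (lt_trans H2 H1).
- by rewrite -E2 H1.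
- by rewrite E1 H2.
- by rewrite E1 E2 eqxx (ltn_trans H1 H2) orbT.
Qed.

Lemma better_total (R : realDomainType) n (v : 'I_n -> R) x y :
  x != y -> better v x y || better v y x.
Proof.
move=> Hxy; rewrite /better; case: (ltgtP (v x) (v y)) => [H|H|E].
- by rewrite orbT.
- by [].
- case: (ltngtP x y) => // /val_inj E'.
  by rewrite E' eqxx in Hxy.
Qed.

Lemma cs_cases (R : realDomainType) n m (v : 'I_n -> R) (r : 'I_n -> {set 'I_n}) (W A : {set 'I_n}) :
  closure_step m v r W A = A \/
  exists x, [/\ x \in W :|: (A :\: potential m v A W), ~~ (r x \subset A)
              & closure_step m v r W A = A :|: r x].
Proof.
rewrite /closure_step; case: pickP => [x /andP[H1 H2]|_]; last by left.
by right; exists x.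
Qed.

Lemma cs_ext (R : realDomainType) n m (v : 'I_n -> R) (r : 'I_n -> {set 'I_n}) (W A : {set 'I_n}) :
  A \subset closure_step m v r W A.
Proof.
case: (cs_cases _ _ m v r W A) => [->//|[x [_ _ ->]]]; exact: subsetUl.
Qed.

Lemma iter_sub (T : finType) (f : {set T} -> {set T}) (A : {set T}) (j d : nat) :
  (forall B : {set T}, B \subset f B) -> iter j f A \subset iter (d + j) f A.
Proof.
move=> H; elim: d => [|d IH] //=; exact: subset_trans IH (H _).
Qed.

Lemma iter_fixpoint (T : finType) (f : {set T} -> {set T}) (A : {set T}) :
  (forall B : {set T}, B \subset f B) -> f (iter #|T|.+1 f A) = iter #|T|.+1 f A.
Proof.
move=> H.
suff: forall k, f (iter k f A) = iter k f A \/ k <= #|iter k f A|.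
  case/(_ #|T|.+1) => // Hc; have := max_card (mem (iter #|T|.+1 f A)).
  by rewrite leqNgt Hc.
elim=> [|k [IH|IH]]; first by right.
  by left; rewrite /= IH IH.
case E: (f (iter k f A) == iter k f A); first by left; rewrite /= (eqP E) (eqP E).
right; rewrite /=; apply: leq_trans _ (proper_card _) ; first exact: IH.
by rewrite properEneq eq_sym E H.
Qed.

Lemma closure_fix (R : realDomainType) n m (v : 'I_n -> R) (r : 'I_n -> {set 'I_n}) (A W : {set 'I_n}) :
  closure_step m v r W (closure m v r A W) = closure m v r A W.
Proof.
rewrite /closure; have := @iter_fixpoint _ (closure_step m v r W) A (cs_ext R n m v r W).
by rewrite card_ord.
Qed.

Lemma closure_ext (R : realDomainType) n m (v : 'I_n -> R) (r : 'I_n -> {set 'I_n}) (A W : {set 'I_n}) :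
  A \subset closure m v r A W.
Proof.
have := @iter_sub _ (closure_step m v r W) A 0 n.+1 (cs_ext R n m v r W).
by rewrite addn0.
Qed.

Lemma closure_closed (R : realDomainType) n m (v : 'I_n -> R) (r : 'I_n -> {set 'I_n}) (A W : {set 'I_n}) x :
  let B := closure m v r A W in
  x \in W :|: (B :\: potential m v B W) -> r x \subset B.
Proof.
move=> B Hx; apply/negPn/negP => Hn.
have := closure_fix _ _ m v r A W; rewrite -/B /closure_step.
case: pickP => [y /andP[_ Hy] E|/(_ x)]; last by rewrite Hx Hn.
have H : r y \subset B by rewrite -E subsetUr.
by rewrite H in Hy.
Qed.

Lemma exh_char (R : realDomainType) n m (v : 'I_n -> R) (A W : {set 'I_n}) x :
  (x \in A :\: potential m v A W) =
  [&& m - #|W| < #|A :\: W|, x \in A :\: W &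
      m - #|W| <= #|[set y in A :\: W | better v y x]|].
Proof.
rewrite /potential; case: leqP => H /=.
  by rewrite setDv inE.
rewrite /topk !inE leqNgt.
by case: (x \in W); case: (x \in A); rewrite /= ?negbK ?andbT ?ltnS.
Qed.

Lemma exh_grow (R : realDomainType) n m (v : 'I_n -> R) (A A' W : {set 'I_n}) x :
  A \subset A' -> x \in A :\: potential m v A W -> x \in A' :\: potential m v A' W.
Proof.
move=> sAA'; rewrite !exh_char => /and3P[H1 H2 H3].
have sD : A :\: W \subset A' :\: W by apply: setSD.
apply/and3P; split.
- exact: leq_trans H1 (subset_leq_card sD).
- exact: (subsetP sD).
- apply: leq_trans H3 (subset_leq_card _); apply/subsetP => y; rewrite !inE.
  move=> /andP[/andP[-> HyA] ->]; by rewrite (subsetP sAA').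
Qed.

Lemma exh_closure (R : realDomainType) n m (v : 'I_n -> R) r (A W : {set 'I_n}) x :
  x \in A :\: potential m v A W ->
  x \in closure m v r A W :\: potential m v (closure m v r A W) W.
Proof. by apply: exh_grow; apply: closure_ext. Qed.

Lemma exh_sel (R : realDomainType) n m (v : 'I_n -> R) (A W : {set 'I_n}) w x :
  w \in potential m v A W :\: W ->
  x \in A :\: potential m v A W -> x \in A :\: potential m v A (w |: W).
Proof.
move=> Hw Hx; have Hx' := Hx; move: Hx'; rewrite exh_char => /and3P[H1 H2 H3].
move: Hw; rewrite {1}/potential leqNgt H1 /= !inE => /andP[HwW].
rewrite (negbTE HwW) /= => /andP[HwA Hcw].
have HwAW : w \in A :\: W by rewrite inE HwW HwA.
have Hxw : x != w.
  apply/eqP => E; move: Hx; rewrite E /potential leqNgt H1 /= !inE.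
  by rewrite HwW HwA Hcw orbT.
have Hbwx : better v w x.
  case/orP: (better_total _ _ v x w Hxw) => // Hbx.
  have : #|[set y in A :\: W | better v y x]| < #|[set y in A :\: W | better v y w]|.
    apply: proper_card; apply/properP; split.
      apply/subsetP => y; rewrite !inE => /andP[-> H] /=; exact: better_trans H Hbx.
    exists x; first by rewrite inE H2 Hbx.
    by rewrite inE better_irr andbF.
  by move=> Hlt; have := leq_ltn_trans (leq_trans H3 (ltnW Hlt)) Hcw; rewrite ltnn.
suff: x \in A :\: potential m v A (w |: W) by rewrite inE.
rewrite exh_char.
have EAD : A :\: (w |: W) = (A :\: W) :\ w.
  by apply/setP => y; rewrite !inE; case: (y == w); case: (y \in W); case: (y \in A).
have ED : [set y in A :\: (w |: W) | better v y x] = [set y in A :\: W | better v y x] :\ w.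
  by apply/setP => y; rewrite EAD !inE; case: (y == w); case: (y \in W); case: (y \in A).
rewrite ED EAD cardsU1 HwW.
have C1 := cardsD1 w (A :\: W); rewrite HwAW in C1.
have C2 := cardsD1 w [set y in A :\: W | better v y x].
rewrite inE HwAW Hbwx in C2.
have Hc0 : 0 < m - #|W| by apply: leq_ltn_trans Hcw.
apply/and3P; split.
- lia.
- by rewrite !inE Hxw; move: H2; rewrite inE.
- lia.
Qed.

Lemma select_in (R : realDomainType) n m (v : 'I_n -> R) r prio (A W : {set 'I_n}) w :
  select m v r prio A W = Some w -> w \in potential m v A W :\: W.
Proof. by rewrite /select; case: pickP => // w' /andP[H _] [<-]. Qed.

Lemma run_S (R : realDomainType) n m (v : 'I_n -> R) r prio k (A W : {set 'I_n}) :
  mudan_run m v r prio k.+1 A W =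
  match select m v r prio (closure m v r A W) W with
  | None => [::]
  | Some w => (closure m v r A W, w) :: mudan_run m v r prio k (closure m v r A W) (w |: W)
  end.
Proof. by []. Qed.

Lemma run_cons (R : realDomainType) n m (v : 'I_n -> R) r prio k (A W : {set 'I_n}) t A1 w :
  mudan_run m v r prio k A W = rcons t (A1, w) ->
  exists k' w', [/\ k = k'.+1, select m v r prio (closure m v r A W) W = Some w' &
     mudan_run m v r prio k A W =
       (closure m v r A W, w') :: mudan_run m v r prio k' (closure m v r A W) (w' |: W)].
Proof.
case: k => [|k]; first by case: t.
rewrite run_S; case E: (select m v r prio (closure m v r A W) W) => [w'|]; last by case: t.
by move=> _; exists k, w'.
Qed.

Lemma L1 (R : realDomainType) n m (v : 'I_n -> R) r prio k :
  forall (A W : {set 'I_n}) t A1 w,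
  mudan_run m v r prio k A W = rcons t (A1, w) ->
  w \notin W /\
  w \notin closure m v r A W :\: potential m v (closure m v r A W) W.
Proof.
elim: k => [|k IH] A W t A1 w Hrun.
  by have [k' [w' [E _ _]]] := run_cons _ _ _ _ _ _ _ _ _ _ _ _ Hrun.
have [k' [w' [Ek Hsel Hcons]]] := run_cons _ _ _ _ _ _ _ _ _ _ _ _ Hrun.
have Ek' : k' = k by case: Ek.
subst k'; rewrite Hcons in Hrun.
have Hw' := select_in _ _ _ _ _ _ _ _ _ Hsel.
case: t Hrun => [|a t] Hrun.
  have [E1 E2] : (closure m v r A W, w') = (A1, w) /\ mudan_run m v r prio k (closure m v r A W) (w' |: W) = [::].
    by case: Hrun => E1 E2 E3; split; [rewrite E1 E2 | exact: E3].
  case: E1 => _ <-.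
  move: Hw'; rewrite in_setD => /andP[HW Hp]; split; first exact: HW.
  by rewrite in_setD Hp.
have [E1 E2] : (closure m v r A W, w') = a /\ mudan_run m v r prio k (closure m v r A W) (w' |: W) = rcons t (A1, w).
  by case: Hrun => E1 E2; split.
have [IH1 IH2] := IH _ _ _ _ _ E2.
move: IH1; rewrite in_setU1 negb_or => /andP[_ HwW]; split; first exact: HwW.
apply/negP => Hex.
have := exh_closure _ _ m v r _ _ _ (exh_sel _ _ _ _ _ _ _ _ Hw' Hex).
by move/negP: IH2.
Qed.

Lemma potential_sub (R : realDomainType) n m (v : 'I_n -> R) (A W : {set 'I_n}) :
  potential m v A W \subset A :|: W.
Proof.
rewrite /potential; case: ifP => _; first exact: subsetUl.
apply/subsetP => x; rewrite in_setU => /orP[H|]; first by rewrite in_setU H orbT.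
rewrite /topk in_set => /andP[]; rewrite in_setD => /andP[_ H] _.
by rewrite in_setU H.
Qed.

Lemma reach_step n (rs : {set 'I_n}) r w x i :
  reach_avoiding rs r w x -> x != w -> i != w -> i \in r x -> reach_avoiding rs r w i.
Proof.
move=> /existsP[j /andP[Hj /andP[Hjw Hc]]] Hx Hi Hir.
apply/existsP; exists j; rewrite Hj Hjw /=.
apply: connect_trans Hc (connect1 _); by rewrite Hx Hi Hir.
Qed.

Lemma closure_inv (R : realDomainType) n m (v : 'I_n -> R) r rs (A W : {set 'I_n}) w :
  w \notin W -> W \subset A ->
  w \notin closure m v r A W :\: potential m v (closure m v r A W) W ->
  (forall i, i \in A -> i != w -> reach_avoiding rs r w i) ->
  (forall i, i \in closure m v r A W -> i != w -> reach_avoiding rs r w i).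
Proof.
move=> HwW sWA Hnex HA.
suff H : forall j, j <= n.+1 -> forall i, i \in iter j (closure_step m v r W) A ->
                    i != w -> reach_avoiding rs r w i by exact: H.
elim=> [|j IH] Hj; first exact: HA.
have Hsub : iter j (closure_step m v r W) A \subset closure m v r A W.
  have := @iter_sub _ (closure_step m v r W) A j (n.+1 - j) (cs_ext R n m v r W).
  by rewrite subnK // ltnW.
rewrite iterS; case: (cs_cases _ _ m v r W (iter j (closure_step m v r W) A)) => [->|[x [Hx _ ->]]].
  exact: IH (ltnW Hj).
have sW : W \subset iter j (closure_step m v r W) A.
  apply: subset_trans sWA _.
  have := @iter_sub _ (closure_step m v r W) A 0 j (cs_ext R n m v r W).
  by rewrite addn0.
have Hxw : x != w.
  apply/eqP => E; move: Hx; rewrite E in_setU => /orP[H|H].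
    by rewrite H in HwW.
  by move/negP: Hnex; apply; apply: exh_grow Hsub H.
have HxA : x \in iter j (closure_step m v r W) A.
  move: Hx; rewrite in_setU => /orP[H|]; first exact: (subsetP sW).
  by rewrite in_setD => /andP[].
move=> i; rewrite in_setU => /orP[Hi|Hi] Hiw; first exact: IH (ltnW Hj) _ Hi Hiw.
exact: reach_step (IH (ltnW Hj) _ HxA Hxw) Hxw Hiw Hi.
Qed.

Lemma L2 (R : realDomainType) n m (v : 'I_n -> R) r prio rs k :
  forall (A W : {set 'I_n}) t A1 w,
  mudan_run m v r prio k A W = rcons t (A1, w) -> W \subset A ->
  (forall i, i \in A -> i != w -> reach_avoiding rs r w i) ->
  (forall i, i \in A1 -> i != w -> reach_avoiding rs r w i).
Proof.
elim: k => [|k IH] A W t A1 w Hrun sWA HA.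
  by have [k' [w' [E _ _]]] := run_cons _ _ _ _ _ _ _ _ _ _ _ _ Hrun.
have [H1 H2] := L1 _ _ _ _ _ _ _ _ _ _ _ _ Hrun.
have HB := closure_inv _ _ m v r rs _ _ _ H1 sWA H2 HA.
have [k' [w' [Ek Hsel Hcons]]] := run_cons _ _ _ _ _ _ _ _ _ _ _ _ Hrun.
have Ek' : k' = k by case: Ek.
subst k'; rewrite Hcons in Hrun.
have Hw' := select_in _ _ _ _ _ _ _ _ _ Hsel.
case: t Hrun => [|a t] Hrun.
  by case: Hrun => <- _ _.
have E2 : mudan_run m v r prio k (closure m v r A W) (w' |: W) = rcons t (A1, w).
  by case: Hrun.
apply: IH _ _ _ _ _ E2 _ HB.
have sWB : W \subset closure m v r A W := subset_trans sWA (closure_ext _ _ _ _ _ _ _).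
rewrite subUset sWB andbT sub1set.
move: Hw'; rewrite in_setD => /andP[HW Hp].
by have := subsetP (potential_sub _ _ _ _ _ _) _ Hp; rewrite in_setU (negbTE HW) orbF.
Qed.

Lemma L3 (R : realDomainType) n m (v : 'I_n -> R) r prio (rs : {set 'I_n}) k :
  forall (A W : {set 'I_n}) t A1 w,
  mudan_run m v r prio k A W = rcons t (A1, w) -> #|W| + k = n.+1 -> rs \subset A ->
  exists (A0 W1 : {set 'I_n}), [/\ rs \subset A0, A1 = closure m v r A0 W1,
                    select m v r prio A1 W1 = Some w &
                    select m v r prio (closure m v r A1 (w |: W1)) (w |: W1) = None].
Proof.
elim: k => [|k IH] A W t A1 w Hrun Hcard HrsA.
  by have [k' [w' [E _ _]]] := run_cons _ _ _ _ _ _ _ _ _ _ _ _ Hrun.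
have [k' [w' [Ek Hsel Hcons]]] := run_cons _ _ _ _ _ _ _ _ _ _ _ _ Hrun.
have Ek' : k' = k by case: Ek.
subst k'; rewrite Hcons in Hrun.
have Hw' := select_in _ _ _ _ _ _ _ _ _ Hsel.
move: (Hw'); rewrite in_setD => /andP[HW _].
have Hc' : #|w' |: W| = #|W| + 1 by rewrite cardsU1 HW addnC.
case: t Hrun => [|a t] Hrun.
  case: Hrun => E1 E2 E3; subst A1 w.
  exists A, W; split => //.
  clear Ek Hcons; case: k IH Hcard E3 => [|k] _ Hcard E3.
    have := max_card (mem (w' |: W)); rewrite card_ord Hc'; lia.
  move: E3; rewrite run_S.
  by case: (select _ _ _ _ _ _).
have E2 : mudan_run m v r prio k (closure m v r A W) (w' |: W) = rcons t (A1, w).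
  by case: Hrun.
apply: IH _ _ _ _ _ E2 _ _.
  by rewrite Hc' -addnA add1n.
exact: subset_trans HrsA (closure_ext _ _ _ _ _ _ _).
Qed.

Lemma sel_none (R : realDomainType) n m (v : 'I_n -> R) r (prio : {set 'I_n} -> R) (A W : {set 'I_n}) :
  select m v r prio A W = None -> potential m v A W :\: W = set0.
Proof.
rewrite /select; case: pickP => // Hn _.
apply/eqP; apply/negPn/negP => Hne.
pose lt := fun y w : 'I_n => (prio (r w) < prio (r y))%R || ((prio (r y) == prio (r w)) && (y < w)%N).
have irr : irreflexive lt by move=> x; rewrite /lt ltxx ltnn andbF.
have tr : transitive lt.
  move=> y x z; rewrite /lt => /orP[H1|/andP[/eqP E1 H1]] /orP[H2|/andP[/eqP E2 H2]].
  - by rewrite (lt_trans H2 H1).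
  - by rewrite -E2 H1.
  - by rewrite E1 H2.
  - by rewrite E1 E2 eqxx (ltn_trans H1 H2) orbT.
have [w Hw Hmin] := exists_min _ lt _ irr tr Hne.
have := Hn w; rewrite Hw /=; move/negP; apply.
apply/forallP => y; apply/implyP => Hy.
have := Hmin y Hy; rewrite /lt negb_or negb_and -leNgt => /andP[Hle Hor].
rewrite le_eqVlt in Hle; case/orP: Hle => [/eqP E|->//].
by move: Hor; rewrite E eqxx ltxx /= -leqNgt.
Qed.

Lemma topk_nonempty (R : realDomainType) n (v : 'I_n -> R) k (S : {set 'I_n}) :
  S != set0 -> 0 < k -> exists x, x \in topk v k S.
Proof.
move=> Hne Hk; have [x Hx Hmin] := exists_min _ (better v) _ (better_irr _ _ v) (better_trans _ _ v) Hne.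
exists x; rewrite /topk inE Hx /=.
suff -> : [set y in S | better v y x] = set0 by rewrite cards0.
apply/setP => y; rewrite !inE; apply/negbTE; apply/negP => /andP[Hy Hb].
by move/negP: (Hmin y Hy).
Qed.

Lemma final_struct (R : realDomainType) n m (v : 'I_n -> R) r prio (A1 W1 : {set 'I_n}) w :
  select m v r prio A1 W1 = Some w ->
  select m v r prio (closure m v r A1 (w |: W1)) (w |: W1) = None ->
  forall x, x \in A1 -> x != w -> x \in W1 :|: (A1 :\: potential m v A1 W1).
Proof.
move=> Hs Hn x HxA Hxw.
have Hw := select_in _ _ _ _ _ _ _ _ _ Hs.
have E0 := sel_none _ _ _ _ _ _ _ _ Hn.
move: (Hw); rewrite in_setD => /andP[HwW HwP].
have HwA : w \in A1.
  by have := subsetP (potential_sub _ _ _ _ _ _) _ HwP; rewrite in_setU (negbTE HwW) orbF.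
rewrite in_setU; case HxW: (x \in W1) => //=.
rewrite in_setD HxA andbT; apply/negP => HxP.
set B2 := closure m v r A1 (w |: W1).
have HxB : x \in B2 :\: (w |: W1).
  by rewrite in_setD in_setU1 (negbTE Hxw) HxW (subsetP (closure_ext _ _ _ _ _ _ _) _ HxA).
have Hc' : #|w |: W1| = #|W1| + 1 by rewrite cardsU1 HwW addnC.
have Hm : m - #|w |: W1| = 0.
  move: E0; rewrite /potential; case: ifP => [_ E0|_ E0].
    by rewrite E0 in_set0 in HxB.
  case: (posnP (m - #|w |: W1|)) => // Hpos.
  have Hne : B2 :\: (w |: W1) != set0 by apply/set0Pn; exists x.
  have [y Hy] := topk_nonempty _ _ v _ _ Hne Hpos.
  move/setP/(_ y): E0; rewrite in_setD in_setU Hy orbT andbT inE.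
  rewrite in_set0; move: Hy; rewrite /topk inE in_setD in_setU => /andP[/andP[-> _] _] //.
have HxAW : x \in A1 :\: W1 by rewrite in_setD HxW HxA.
have HwAW : w \in A1 :\: W1 by rewrite in_setD HwW HwA.
move: HxP HwP; rewrite /potential; case: ifP => [Hle _ _|_].
  have : #|[set x; w]| <= #|A1 :\: W1|.
    apply: subset_leq_card; apply/subsetP => y; rewrite !inE => /orP[/eqP->|/eqP->].
      by move: HxAW; rewrite in_setD.
    by move: HwAW; rewrite in_setD.
  rewrite cards2 Hxw /= => H; have := leq_trans H Hle.
  by move: Hm; rewrite Hc' subnDA => /eqP; rewrite subn_eq0 ltnNge => ->.
rewrite !in_setU HxW (negbTE HwW) /= /topk !inE => /andP[_ Hcx] /andP[_ Hcw].
have Hm1 : m - #|W1| <= 1.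
  by move: Hm; rewrite Hc' subnDA => /eqP; rewrite subn_eq0.
case/orP: (better_total _ _ v x w Hxw) => Hb.
- have H0 : 0 < #|[set y in A1 :\: W1 | better v y w]|.
    by apply/card_gt0P; exists x; rewrite inE HxAW Hb.
  by have := leq_ltn_trans H0 Hcw; rewrite ltnNge Hm1.
- have H0 : 0 < #|[set y in A1 :\: W1 | better v y x]|.
    by apply/card_gt0P; exists w; rewrite inE HwAW Hb.
  by have := leq_ltn_trans H0 Hcx; rewrite ltnNge Hm1.
Qed.

Theorem lemma3 (R : realDomainType) (n m : nat) (rs : {set 'I_n})
    (r : 'I_n -> {set 'I_n}) (v : 'I_n -> R) (prio : {set 'I_n} -> R) :
  (1 <= m)%N ->
  (forall i, (0 <= v i)%R) ->
  (forall S T : {set 'I_n}, S \subset T -> (prio S <= prio T)%R) ->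
  forall (t : seq ({set 'I_n} * 'I_n)) (A : {set 'I_n}) (wstar : 'I_n),
    mudan_trace m v r prio rs = rcons t (A, wstar) ->
    forall i : 'I_n, i != wstar ->
      (i \in A) = reach_avoiding rs r wstar i.
Proof.
move=> _ _ _ t A w Htr i Hiw.
have Hrun : mudan_run m v r prio n.+1 rs set0 = rcons t (A, w) := Htr.
apply/idP/idP.
  move=> HiA; apply: (L2 _ _ m v r prio rs _ _ _ _ _ _ Hrun (sub0set _) _ i HiA Hiw).
  move=> j Hj Hjw; apply/existsP; exists j; by rewrite Hj Hjw connect0.
have Hc0 : #|(set0 : {set 'I_n})| + n.+1 = n.+1 by rewrite cards0.
have [A0 [W1 [HrsA0 EA Hs Hn]]] := L3 _ _ m v r prio rs _ _ _ _ _ _ Hrun Hc0 (subxx _).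
have Hst := final_struct _ _ m v r prio _ _ _ Hs Hn.
have Hcl : forall y, y \in W1 :|: (A :\: potential m v A W1) -> r y \subset A.
  by rewrite EA; apply: closure_closed.
have HrsA : rs \subset A by rewrite EA; exact: subset_trans HrsA0 (closure_ext _ _ _ _ _ _ _).
move/existsP=> [j /andP[Hj /andP[Hjw /connectP[p Hp ->]]]].
have HjA : j \in A := subsetP HrsA _ Hj.
elim: p j HjA Hjw Hp {Hj} => [|y p IHp] j HjA Hjw //=.
move=> /andP[/and3P[_ Hyw Hyr] Hp].
apply: IHp Hyw Hp.
exact: (subsetP (Hcl _ (Hst _ HjA Hjw))).
Qed.
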